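(* For any projection algebra $P$ there is a unique (up to isomorphism) projection-generated fundamental DRC-semigroup with projection algebra (isomorphic to) $P$, namely $\mathbb M(P)\cong\mathbb F(P)/\mu_{\mathbb F(P)}$.
   Context: Maps are written on the right and composed left to right. A projection algebra is a set $P$ with maps $\theta_p,\delta_p:P\to P$ ($p\in P$) such that for all $p,q$: $p\theta_p=p$, $p\delta_p=p$; $p\theta_{q\theta_p}=q\theta_p$, $p\delta_{q\delta_p}=q\delta_p$; $\theta_q\theta_{q\theta_p}=\theta_q\theta_p$, $\delta_q\delta_{q\delta_p}=\delta_q\delta_p$; $\theta_p\delta_p=\theta_p$, $\delta_p\theta_p=\delta_p$; $\theta_{p\delta_q}\theta_p=\theta_q\theta_p$, $\delta_{p\theta_q}\delta_p=\delta_q\delta_p$. Write $p\,\mathscr F\,q$ iff $p=q\delta_p$ and $q=p\theta_q$. A DRC-semigroup is $(S,\cdot,D,R)$, $(S,\cdot)$ a semigroup, $D,R:S\to S$ with, for all $a,b$: $D(a)a=a$, $aR(a)=a$; $D(ab)=D(aD(b))$, $R(ab)=R(R(a)b)$; $D(ab)=D(a)D(ab)D(a)$, $R(ab)=R(b)R(ab)R(b)$; $R(D(a))=D(a)$, $D(R(a))=R(a)$. Its projections $\mathbf P(S)=\{D(a):a\in S\}$ form a projection algebra with $q\theta_p=R(qp)$, $q\delta_p=D(pq)$; $S$ is projection-generated if generated as a semigroup by $\mathbf P(S)$. A congruence on $S$ is a semigroup congruence $\sigma$ with $a\,\sigma\,b\Rightarrow D(a)\,\sigma\,D(b)$ and $R(a)\,\sigma\,R(b)$;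 it is projection-separating if $p\,\sigma\,q\Rightarrow p=q$ for projections. $\mu_S$ denotes the maximum projection-separating congruence, and $S$ is fundamental if $\mu_S$ is equality. $\mathbb F(P)$ is the semigroup presented by generators $x_p$ ($p\in P$) and relations $x_p^2=x_p$, $x_px_q=x_px_{p\theta_q}$, $x_px_q=x_{q\delta_p}x_q$; every element equals $\overline{x_{p_1}\cdots x_{p_k}}$ for some $p_1\mathscr F\cdots\mathscr F p_k$ (with $p_1,p_k$ determined by the element), and with $D(\overline{x_{p_1}\cdots x_{p_k}})=\overline{x_{p_1}}$, $R(\overline{x_{p_1}\cdots x_{p_k}})=\overline{x_{p_k}}$ it is a DRC-semigroup. $\mathbb M(P)$ is the subsemigroup of $\mathcal T_P\times\mathcal T_P^{\mathrm{op}}$ (product $(\alpha,\alpha')(\beta,\beta')=(\alpha\beta,\beta'\alpha')$, $\mathcal T_P$ the full transformation semigroup on $P$) generated by the pairs $\hat p=(\theta_p,\delta_p)$, $p\in P$, with $D(\hat p_1\cdots\hat p_k)=\hat p_1$, $R(\hat p_1\cdots\hat p_k)=\hat p_k$ whenever $p_1\mathscr F\cdots\mathscr F p_k$. *)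

(* Defs.v *)
From mathcomp Require Import ssreflect ssrfun ssrbool seq.
From Stdlib Require Import ClassicalEpsilon.

Set Implicit Arguments.
Unset Strict Implicit.
Unset Printing Implicit Defensive.

(* Projection algebras.  Maps are written on the right:                *)
(*   q θ_p  is  theta p q,   q δ_p  is  delta p q,                     *)
(* and composites are left to right:  θ_q θ_p = fun x => theta p (theta q x). *)
Definition is_projalg (P : Type) (theta delta : P -> P -> P) : Prop :=
  (forall p, theta p p = p) /\ (forall p, delta p p = p) /\
  (forall p q, theta (theta p q) p = theta p q) /\
  (forall p q, delta (delta p q) p = delta p q) /\
  (forall p q x, theta (theta p q) (theta q x) = theta p (theta q x)) /\
  (forall p q x, delta (delta p q) (delta q x) = delta p (delta q x)) /\
  (forall p x, delta p (theta p x) = theta p x) /\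
  (forall p x, theta p (delta p x) = delta p x) /\
  (forall p q x, theta p (theta (delta q p) x) = theta p (theta q x)) /\
  (forall p q x, delta p (delta (theta q p) x) = delta p (delta q x)).

Definition Frel (P : Type) (theta delta : P -> P -> P) (p q : P) : Prop :=
  p = delta p q /\ q = theta q p.

Fixpoint Fchain (P : Type) (theta delta : P -> P -> P) (s : seq P) : Prop :=
  match s with
  | p :: ((q :: _) as t) => Frel theta delta p q /\ Fchain theta delta t
  | _ => True
  end.

Definition is_DRC (S : Type) (mul : S -> S -> S) (D R : S -> S) : Prop :=
  (forall a b c, mul a (mul b c) = mul (mul a b) c) /\
  (forall a, mul (D a) a = a) /\ (forall a, mul a (R a) = a) /\
  (forall a b, D (mul a b) = D (mul a (D b))) /\
  (forall a b, R (mul a b) = R (mul (R a) b)) /\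
  (forall a b, D (mul a b) = mul (mul (D a) (D (mul a b))) (D a)) /\
  (forall a b, R (mul a b) = mul (mul (R b) (R (mul a b))) (R b)) /\
  (forall a, R (D a) = D a) /\ (forall a, D (R a) = R a).

Definition is_proj (S : Type) (D : S -> S) (x : S) : Prop := exists a, x = D a.

(* f : P -> S is an isomorphism of projection algebras from P onto P(S),
   where P(S) carries q θ_p = R(qp), q δ_p = D(pq). *)
Definition proj_iso (P : Type) (theta delta : P -> P -> P)
    (S : Type) (mul : S -> S -> S) (D R : S -> S) (f : P -> S) : Prop :=
  (forall p, is_proj D (f p)) /\
  (forall x, is_proj D x -> exists p, f p = x) /\
  (forall p q, f p = f q -> p = q) /\
  (forall p q, f (theta p q) = R (mul (f q) (f p))) /\
  (forall p q, f (delta p q) = D (mul (f p) (f q))).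

Inductive sgen (S : Type) (mul : S -> S -> S) (X : S -> Prop) : S -> Prop :=
  | sgen_base x : X x -> sgen mul X x
  | sgen_mul x y : sgen mul X x -> sgen mul X y -> sgen mul X (mul x y).

Definition proj_generated (S : Type) (mul : S -> S -> S) (D : S -> S) : Prop :=
  forall a, sgen mul (is_proj D) a.

Definition is_congruence (S : Type) (mul : S -> S -> S) (D R : S -> S)
    (sig : S -> S -> Prop) : Prop :=
  (forall a, sig a a) /\ (forall a b, sig a b -> sig b a) /\
  (forall a b c, sig a b -> sig b c -> sig a c) /\
  (forall a b c, sig a b -> sig (mul c a) (mul c b)) /\
  (forall a b c, sig a b -> sig (mul a c) (mul b c)) /\
  (forall a b, sig a b -> sig (D a) (D b)) /\
  (forall a b, sig a b -> sig (R a) (R b)).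

Definition proj_separating (S : Type) (D : S -> S) (sig : S -> S -> Prop) : Prop :=
  forall p q, is_proj D p -> is_proj D q -> sig p q -> p = q.

Definition is_psc (S : Type) (mul : S -> S -> S) (D R : S -> S)
    (sig : S -> S -> Prop) : Prop :=
  is_congruence mul D R sig /\ proj_separating D sig.

Definition is_mu (S : Type) (mul : S -> S -> S) (D R : S -> S)
    (sig : S -> S -> Prop) : Prop :=
  is_psc mul D R sig /\
  (forall tau, is_psc mul D R tau -> forall a b, tau a b -> sig a b).

Definition fundamental (S : Type) (mul : S -> S -> S) (D R : S -> S) : Prop :=
  exists mu, is_mu mul D R mu /\ (forall a b, mu a b <-> a = b).

Definition DRC_iso (S : Type) (mulS : S -> S -> S) (DS RS : S -> S)
    (T : Type) (mulT : T -> T -> T) (DT RT : T -> T) : Prop :=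
  exists f : S -> T, bijective f /\
    (forall a b, f (mulS a b) = mulT (f a) (f b)) /\
    (forall a, f (DS a) = DT (f a)) /\ (forall a, f (RS a) = RT (f a)).

Definition quot (T : Type) (r : T -> T -> Prop) : Type :=
  {X : T -> Prop | exists t, X = r t}.

Definition cls (T : Type) (r : T -> T -> Prop) (t : T) : quot r :=
  exist (fun X => exists t, X = r t) (r t) (ex_intro _ t erefl).

Definition rep (T : Type) (r : T -> T -> Prop) (X : quot r) : T :=
  proj1_sig (constructive_indefinite_description _ (proj2_sig X)).

Definition qmul (T : Type) (r : T -> T -> Prop) (m : T -> T -> T)
  (X Y : quot r) : quot r := cls r (m (rep X) (rep Y)).

Definition qun (T : Type) (r : T -> T -> Prop) (f : T -> T)
  (X : quot r) : quot r := cls r (f (rep X)).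

(* A nonempty word x_p x_{p_1} ... x_{p_n} is the pair (p, [:: p_1; ...; p_n]). *)
Section FreeDRC.
Variables (P : Type) (theta delta : P -> P -> P).

Definition word := (P * seq P)%type.
Definition wseq (w : word) : seq P := w.1 :: w.2.
Definition wcat (u v : word) : word := (u.1, u.2 ++ wseq v).

Inductive Fcong : word -> word -> Prop :=
  | Fc_idem p : Fcong (p, [:: p]) (p, [::])
  | Fc_theta p q : Fcong (p, [:: q]) (p, [:: theta q p])
  | Fc_delta p q : Fcong (p, [:: q]) (delta p q, [:: q])
  | Fc_refl u : Fcong u u
  | Fc_sym u v : Fcong u v -> Fcong v u
  | Fc_trans u v w : Fcong u v -> Fcong v w -> Fcong u w
  | Fc_left u v w : Fcong u v -> Fcong (wcat w u) (wcat w v)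
  | Fc_right u v w : Fcong u v -> Fcong (wcat u w) (wcat v w).

Definition Ftype : Type := quot Fcong.

Definition Fmul : Ftype -> Ftype -> Ftype := qmul wcat.

Definition FD (X : Ftype) : Ftype :=
  epsilon (inhabits X) (fun Y => exists p ps,
    Fchain theta delta (p :: ps) /\ X = cls Fcong (p, ps) /\
    Y = cls Fcong (p, [::])).

Definition FR (X : Ftype) : Ftype :=
  epsilon (inhabits X) (fun Y => exists p ps,
    Fchain theta delta (p :: ps) /\ X = cls Fcong (p, ps) /\
    Y = cls Fcong (last p ps, [::])).

(* M(P) <= T_P x T_P^op, generated by hat p = (theta_p, delta_p)       *)
Definition raw := ((P -> P) * (P -> P))%type.
Definition rmul (x y : raw) : raw :=
  (fun t => y.1 (x.1 t), fun t => x.2 (y.2 t)).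
Definition hat (p : P) : raw := (theta p, delta p).
Definition prodhat (w : word) : raw := foldl (fun a q => rmul a (hat q)) (hat w.1) w.2.

Definition inM (x : raw) : Prop := sgen rmul (fun y => exists p, y = hat p) x.

Definition Mtype : Type := {x : raw | inM x}.

Definition Mmul (X Y : Mtype) : Mtype :=
  exist inM (rmul (proj1_sig X) (proj1_sig Y))
    (sgen_mul (proj2_sig X) (proj2_sig Y)).

Definition MD (X : Mtype) : Mtype :=
  epsilon (inhabits X) (fun Y => exists p ps,
    Fchain theta delta (p :: ps) /\ proj1_sig X = prodhat (p, ps) /\
    proj1_sig Y = hat p).

Definition MR (X : Mtype) : Mtype :=
  epsilon (inhabits X) (fun Y => exists p ps,
    Fchain theta delta (p :: ps) /\ proj1_sig X = prodhat (p, ps) /\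
    proj1_sig Y = hat (last p ps)).

End FreeDRC.

(* Main.v *)
Require Import Defs.
From mathcomp Require Import ssreflect ssrfun ssrbool seq.
From Stdlib Require Import ClassicalEpsilon FunctionalExtensionality PropExtensionality ProofIrrelevance.

Set Implicit Arguments.
Unset Strict Implicit.
Unset Printing Implicit Defensive.

Section PA.
Variables (P : Type) (theta delta : P -> P -> P).
Hypothesis HP : is_projalg theta delta.

Lemma A1 p : theta p p = p. Proof. by case: HP. Qed.
Lemma A2 p : delta p p = p. Proof. by case: HP => _ []. Qed.
Lemma A3 p q : theta (theta p q) p = theta p q. Proof. by case: HP => _ [_ []]. Qed.
Lemma A4 p q : delta (delta p q) p = delta p q. Proof. by case: HP => _ [_ [_ []]]. Qed.
Lemma A5 p q x : theta (theta p q) (theta q x) = theta p (theta q x).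
Proof. by case: HP => _ [_ [_ [_ []]]]. Qed.
Lemma A6 p q x : delta (delta p q) (delta q x) = delta p (delta q x).
Proof. by case: HP => _ [_ [_ [_ [_ []]]]]. Qed.
Lemma A7 p x : delta p (theta p x) = theta p x.
Proof. by case: HP => _ [_ [_ [_ [_ [_ []]]]]]. Qed.
Lemma A8 p x : theta p (delta p x) = delta p x.
Proof. by case: HP => _ [_ [_ [_ [_ [_ [_ []]]]]]]. Qed.
Lemma A9 p q x : theta p (theta (delta q p) x) = theta p (theta q x).
Proof. by case: HP => _ [_ [_ [_ [_ [_ [_ [_ []]]]]]]]. Qed.
Lemma A10 p q x : delta p (delta (theta q p) x) = delta p (delta q x).
Proof. by case: HP => _ [_ [_ [_ [_ [_ [_ [_ []]]]]]]]. Qed.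

Lemma thth p x : theta p (theta p x) = theta p x.
Proof. by have := A8 p (theta p x); rewrite !A7. Qed.
Lemma dede p x : delta p (delta p x) = delta p x.
Proof. by have := A7 p (delta p x); rewrite !A8. Qed.

Definition le r p := theta p r = r.

Lemma le_de r p : le r p -> delta p r = r.
Proof. by rewrite /le => H; rewrite -H A7. Qed.
Lemma de_le r p : delta p r = r -> le r p.
Proof. by rewrite /le => H; rewrite -H A8. Qed.
Lemma le_th' p x : le (theta p x) p. Proof. exact: thth. Qed.
Lemma le_de' p x : le (delta p x) p. Proof. exact: A8. Qed.

Lemma leE r p : le r p -> theta r p = r.
Proof. by move=> H; have := A3 p r; rewrite H. Qed.
Lemma leE' r p : le r p -> delta r p = r.
Proof. by move=> H; have := A4 p r; rewrite (le_de H). Qed.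

Lemma D5 r p x : le r p -> theta p (theta r x) = theta r x.
Proof. by move=> H; have := A5 p r x; rewrite H thth. Qed.
Lemma D6 r p x : le r p -> theta r (theta p x) = theta r x.
Proof. by move=> H; have := A9 r p x; rewrite (le_de H) thth. Qed.
Lemma D5' r p x : le r p -> delta p (delta r x) = delta r x.
Proof. by move=> H; have := A6 p r x; rewrite (le_de H) dede. Qed.
Lemma D6' r p x : le r p -> delta r (delta p x) = delta r x.
Proof. by move=> H; have := A10 r p x; rewrite H dede. Qed.

Lemma antisym p q : delta q p = p -> delta p q = q -> p = q.
Proof.
move=> h1 h2; have l1 := de_le h1; have l2 := de_le h2.
by have := A3 q p; rewrite l1 l2.
Qed.

Lemma dethe p q : delta p (theta q p) = delta p q.
Proof.
have := A10 p q q; rewrite (leE' (le_th' q p)) A2 => ->.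
done.
Qed.

Lemma D8 p q : Frel theta delta (delta p q) (theta q p).
Proof.
split.
- rewrite -(A7 q p) A6 A7 dethe. done.
- rewrite -(A8 p q) A5 A8.
  by have := A9 q p p; rewrite (leE (le_de' p q)) A1.
Qed.

Lemma Fext p q s : Frel theta delta p q -> le s q -> theta s p = s.
Proof.
case=> _ h2 hs; have := D6 p hs; rewrite -h2 => <-. exact: leE.
Qed.


Notation hat := (hat theta delta).
Notation prodhat := (prodhat theta delta).
Notation Fcong := (Fcong theta delta).
Notation Fchain := (Fchain theta delta).
Notation Frel := (Frel theta delta).

Lemma raw_eq (x y : raw P) : x.1 =1 y.1 -> x.2 =1 y.2 -> x = y.
Proof.
case: x => a b; case: y => c d /= h1 h2.
by rewrite (functional_extensionality _ _ h1) (functional_extensionality _ _ h2).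
Qed.

Lemma rmulA (x y z : raw P) : rmul x (rmul y z) = rmul (rmul x y) z.
Proof. by []. Qed.

Lemma foldl_rmul a b s :
  foldl (fun a q => rmul a (hat q)) (rmul a b) s =
  rmul a (foldl (fun a q => rmul a (hat q)) b s).
Proof. by elim: s b => //= x s IH b; rewrite -IH. Qed.

Lemma prodhat_cat u v : prodhat (wcat u v) = rmul (prodhat u) (prodhat v).
Proof.
case: u => p ps; case: v => q qs.
by rewrite /prodhat /wcat /wseq /= foldl_cat /= foldl_rmul.
Qed.

Lemma prodhat_rcons p s x : prodhat (p, rcons s x) = rmul (prodhat (p, s)) (hat x).
Proof. by rewrite /prodhat /= foldl_rcons. Qed.

Lemma hat_idem p : rmul (hat p) (hat p) = hat p.
Proof. apply: raw_eq => t /=; [exact: thth | exact: dede]. Qed.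
Lemma hat_theta p q : rmul (hat p) (hat q) = rmul (hat p) (hat (theta q p)).
Proof. apply: raw_eq => t /=; [by rewrite A5 | by rewrite A10]. Qed.
Lemma hat_delta p q : rmul (hat p) (hat q) = rmul (hat (delta p q)) (hat q).
Proof. apply: raw_eq => t /=; [by rewrite A9 | by rewrite A6]. Qed.
Lemma hat_le_l p r : le r p -> rmul (hat p) (hat r) = hat r.
Proof. move=> h; apply: raw_eq => t /=; [exact: D6 | exact: D5']. Qed.
Lemma hat_le_r p r : le r p -> rmul (hat r) (hat p) = hat r.
Proof. move=> h; apply: raw_eq => t /=; [exact: D5 | exact: D6']. Qed.

Lemma hat_inj p q : hat p = hat q -> p = q.
Proof.
move=> h; have e1 : theta p = theta q by move: h => [].
apply: antisym; apply: le_de; rewrite /le.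
- by rewrite -e1 A1.
- by rewrite e1 A1.
Qed.

Lemma prodhat_resp u v : Fcong u v -> prodhat u = prodhat v.
Proof.
elim=> //=.
- move=> p; exact: hat_idem.
- move=> p q; exact: hat_theta.
- move=> p q; exact: hat_delta.
- by move=> u0 v0 w _ ->.
- by move=> u0 v0 w _ h; rewrite !prodhat_cat h.
- by move=> u0 v0 w _ h; rewrite !prodhat_cat h.
Qed.

Lemma prodhat_headidem w : rmul (hat w.1) (prodhat w) = prodhat w.
Proof. by case: w => p ps; rewrite /prodhat /= -foldl_rmul hat_idem. Qed.

Lemma prodhat_lastidem w : rmul (prodhat w) (hat (last w.1 w.2)) = prodhat w.
Proof.
case: w => p ps /=; case/lastP: ps => [|s x].
  by rewrite /prodhat /= hat_idem.
by rewrite last_rcons prodhat_rcons -rmulA hat_idem.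
Qed.

Lemma Fchain_rcons p s x :
  Fchain (p :: rcons s x) <-> Fchain (p :: s) /\ Frel (last p s) x.
Proof.
elim: s p => [|y s IH] p; first by split; [case | case].
change (Frel p y /\ Fchain (y :: rcons s x) <->
  (Frel p y /\ Fchain (y :: s)) /\ Frel (last y s) x).
rewrite IH; split; [by case=> a [b c] | by case=> [[a b] c]].
Qed.

Definition hd (w : word P) := (prodhat w).2 (last w.1 w.2).
Definition tl (w : word P) := (prodhat w).1 w.1.

Lemma Fstep p q : Fcong (p, [:: q]) (delta p q, [:: theta q p]).
Proof.
apply: Fc_trans (Fc_theta _ _ p q) _; rewrite -(dethe p q); exact: Fc_delta.
Qed.

Lemma Fsym u v : Fcong u v -> Fcong v u. Proof. exact: Fc_sym. Qed.

Lemma chain_ext p ps q : Fchain (p :: ps) ->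
  exists p' ps', [/\ Fchain (p' :: ps'), Fcong (wcat (p, ps) (q, [::])) (p', ps'),
     last p' ps' = theta q (last p ps) & p' = (prodhat (p, ps)).2 q].
Proof.
elim/last_ind: ps q => [|ps0 pk IH] q.
  move=> _; exists (delta p q), [:: theta q p]; split => //=.
  - split => //; exact: D8.
  - exact: Fstep.
move/Fchain_rcons => [hc hf].
set s := delta pk q; set t := theta q pk.
have [p0 [ps1 [h1 h2 h3 h4]]] := IH s hc.
have hl : last p0 ps1 = s.
  by rewrite h3; apply: (Fext hf); exact: le_de'.
exists p0, (rcons ps1 t); split.
- by apply/Fchain_rcons; split => //; rewrite hl; exact: D8.
- have e1 : wcat (p, rcons ps0 pk) (q, [::]) = wcat (p, ps0) (pk, [:: q]).
    by rewrite /wcat /wseq /= cat_rcons.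
  rewrite e1; apply: Fc_trans (Fc_left (p, ps0) (Fstep pk q)) _.
  have e2 : wcat (p, ps0) (delta pk q, [:: theta q pk]) =
            wcat (wcat (p, ps0) (s, [::])) (t, [::]).
    by rewrite /wcat /wseq /= -catA.
  rewrite e2; apply: Fc_trans (Fc_right (t, [::]) h2) _.
  by rewrite /wcat /wseq /= cats1; exact: Fc_refl.
- by rewrite !last_rcons.
- by rewrite h4 prodhat_rcons.
Qed.

Lemma reduce w : exists p ps, [/\ Fchain (p :: ps), Fcong w (p, ps),
   p = hd w & last p ps = tl w].
Proof.
case: w => p ps; elim/last_ind: ps => [|ps0 q [p0 [ps1 [h1 h2 h3 h4]]]].
  by exists p, [::]; split => //=; [exact: Fc_refl | rewrite /hd /= A2 | rewrite /tl /= A1].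
have [p' [ps' [g1 g2 g3 g4]]] := chain_ext q h1.
exists p', ps'; split => //.
- have e1 : (p, rcons ps0 q) = wcat (p, ps0) (q, [::]) by rewrite /wcat /= cats1.
  rewrite e1; exact: Fc_trans (Fc_right _ h2) g2.
- rewrite g4 /hd /= last_rcons prodhat_rcons /= A2 -(prodhat_resp h2); done.
- rewrite g3 h4 /tl prodhat_rcons //.
Qed.

Lemma chain_hd_tl p ps : Fchain (p :: ps) -> hd (p, ps) = p /\ tl (p, ps) = last p ps.
Proof.
elim/last_ind: ps => [|ps0 x IH]; first by rewrite /hd /tl /= A1 A2.
move/Fchain_rcons => [hc [hf1 hf2]]; have [i1 i2] := IH hc.
split.
- rewrite /hd /= last_rcons prodhat_rcons /= A2.
  rewrite -(prodhat_lastidem (p, ps0)) /= -hf1; exact: i1.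
- by rewrite /tl prodhat_rcons /= last_rcons -/(tl (p, ps0)) i2 -hf2.
Qed.

Lemma chain_uniq p ps q qs : Fchain (p :: ps) -> Fchain (q :: qs) ->
  prodhat (p, ps) = prodhat (q, qs) -> p = q /\ last p ps = last q qs.
Proof.
move=> c1 c2 e.
have [h1 t1] := chain_hd_tl c1; have [h2 t2] := chain_hd_tl c2.
have E1 t : (prodhat (q, qs)).2 t = delta q ((prodhat (q, qs)).2 t).
  by rewrite -{1}(prodhat_headidem (q, qs)).
have E2 t : (prodhat (p, ps)).2 t = delta p ((prodhat (p, ps)).2 t).
  by rewrite -{1}(prodhat_headidem (p, ps)).
have ep : p = q.
  apply: antisym.
  - by rewrite -h1 /hd e -E1.
  - by rewrite -h2 /hd -e -E2.
split => //; by rewrite -t1 -t2 /tl e /= ep.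
Qed.

Lemma hd_resp u v : prodhat u = prodhat v -> hd u = hd v /\ tl u = tl v.
Proof.
move=> e.
have [p [ps [c1 f1 h1 t1]]] := reduce u.
have [q [qs [c2 f2 h2 t2]]] := reduce v.
have := chain_uniq c1 c2; rewrite -(prodhat_resp f1) -(prodhat_resp f2) e.
case=> // a b; by rewrite -h1 -h2 -t1 -t2 b a.
Qed.


Notation MT := (Mtype theta delta).
Notation Mmul := (@Mmul P theta delta).
Notation MD := (@MD P theta delta).
Notation MR := (@MR P theta delta).

Lemma Meq (X Y : MT) : proj1_sig X = proj1_sig Y -> X = Y.
Proof.
case: X => x hx; case: Y => y hy /= e; subst y.
by rewrite (proof_irrelevance _ hx hy).
Qed.

Lemma inM_word x : inM theta delta x -> exists w, x = prodhat w.
Proof.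
elim=> [y [p ->] | y z _ [u ->] _ [v ->]]; first by exists (p, [::]).
by exists (wcat u v); rewrite prodhat_cat.
Qed.

Lemma inM_prodhat w : inM theta delta (prodhat w).
Proof.
case: w => p ps; rewrite /prodhat /=.
have : inM theta delta (hat p) by apply: sgen_base; exists p.
elim: ps (hat p) => //= q s IH a ha; apply: IH; apply: sgen_mul ha _.
by apply: sgen_base; exists q.
Qed.

Definition fM p : MT := exist _ (hat p) (@sgen_base _ _ _ (hat p) (ex_intro _ p erefl)).

Lemma M_chain (X : MT) : exists p ps, Fchain (p :: ps) /\ proj1_sig X = prodhat (p, ps).
Proof.
have [w e] := inM_word (proj2_sig X).
have [p [ps [c f _ _]]] := reduce w.
by exists p, ps; rewrite e (prodhat_resp f).
Qed.

Lemma MD_spec (X : MT) w : proj1_sig X = prodhat w -> proj1_sig (MD X) = hat (hd w).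
Proof.
move=> e.
have [p [ps [c f h _]]] := reduce w.
set pr := (fun Y : MT => exists p ps, Fchain (p :: ps) /\ proj1_sig X = prodhat (p, ps) /\
    proj1_sig Y = hat p).
have ex : exists Y, pr Y.
  exists (fM p), p, ps; split => //; split => //; by rewrite e (prodhat_resp f).
have := epsilon_spec (inhabits X) pr ex.
rewrite /Defs.MD; move=> [p' [ps' [c' [e' ->]]]].
have H : prodhat (p, ps) = prodhat (p', ps') by rewrite -e' -(prodhat_resp f).
by have [<- _] := chain_uniq c c' H; rewrite h.
Qed.

Lemma MR_spec (X : MT) w : proj1_sig X = prodhat w -> proj1_sig (MR X) = hat (tl w).
Proof.
move=> e.
have [p [ps [c f _ t]]] := reduce w.
set pr := (fun Y : MT => exists p ps, Fchain (p :: ps) /\ proj1_sig X = prodhat (p, ps) /\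
    proj1_sig Y = hat (last p ps)).
have ex : exists Y, pr Y.
  exists (fM (last p ps)), p, ps; split => //; split => //; by rewrite e (prodhat_resp f).
have := epsilon_spec (inhabits X) pr ex.
rewrite /Defs.MR; move=> [p' [ps' [c' [e' ->]]]].
have H : prodhat (p, ps) = prodhat (p', ps') by rewrite -e' -(prodhat_resp f).
by have [_ <-] := chain_uniq c c' H; rewrite t.
Qed.


Lemma hd_cat u v : hd (wcat u v) = (prodhat u).2 (hd v).
Proof.
rewrite /hd prodhat_cat /=; case: u => p ps; case: v => q qs /=.
by rewrite last_cat.
Qed.

Lemma tl_cat u v : tl (wcat u v) = (prodhat v).1 (tl u).
Proof. by rewrite /tl prodhat_cat. Qed.

Lemma hd_le p ps t : le ((prodhat (p, ps)).2 t) p.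
Proof.
have -> : (prodhat (p, ps)).2 t = delta p ((prodhat (p, ps)).2 t).
  by rewrite -{1}(prodhat_headidem (p, ps)).
exact: le_de'.
Qed.

Lemma tl_le p ps t : le ((prodhat (p, ps)).1 t) (last p ps).
Proof.
have -> : (prodhat (p, ps)).1 t = theta (last p ps) ((prodhat (p, ps)).1 t).
  by rewrite -{1}(prodhat_lastidem (p, ps)).
exact: le_th'.
Qed.

Lemma Mmul_val (a b : MT) : proj1_sig (Mmul a b) = rmul (proj1_sig a) (proj1_sig b).
Proof. by []. Qed.

Lemma hd_single q : hd (q, [::]) = q. Proof. exact: A2. Qed.
Lemma tl_single q : tl (q, [::]) = q. Proof. exact: A1. Qed.

Lemma M_DRC : is_DRC Mmul MD MR.
Proof.
split; first by move=> a b c; apply: Meq.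
split.
  move=> a; have [p [ps [c e]]] := M_chain a; apply: Meq.
  rewrite Mmul_val (MD_spec e) e (chain_hd_tl c).1; exact: prodhat_headidem.
split.
  move=> a; have [p [ps [c e]]] := M_chain a; apply: Meq.
  rewrite Mmul_val (MR_spec e) e (chain_hd_tl c).2; exact: prodhat_lastidem.
split.
  move=> a b; have [p [ps [c e]]] := M_chain a; have [q [qs [c' e']]] := M_chain b.
  apply: Meq.
  have E1 : proj1_sig (Mmul a b) = prodhat (wcat (p, ps) (q, qs)).
    by rewrite prodhat_cat Mmul_val e e'.
  have E2 : proj1_sig (Mmul a (MD b)) = prodhat (wcat (p, ps) (q, [::])).
    by rewrite prodhat_cat Mmul_val e (MD_spec e') (chain_hd_tl c').1.
  by rewrite (MD_spec E1) (MD_spec E2) !hd_cat hd_single (chain_hd_tl c').1.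
split.
  move=> a b; have [p [ps [c e]]] := M_chain a; have [q [qs [c' e']]] := M_chain b.
  apply: Meq.
  have E1 : proj1_sig (Mmul a b) = prodhat (wcat (p, ps) (q, qs)).
    by rewrite prodhat_cat Mmul_val e e'.
  have E2 : proj1_sig (Mmul (MR a) b) = prodhat (wcat (last p ps, [::]) (q, qs)).
    by rewrite prodhat_cat Mmul_val e' (MR_spec e) (chain_hd_tl c).2.
  by rewrite (MR_spec E1) (MR_spec E2) !tl_cat tl_single (chain_hd_tl c).2.
split.
  move=> a b; have [p [ps [c e]]] := M_chain a; have [q [qs [c' e']]] := M_chain b.
  apply: Meq.
  have E1 : proj1_sig (Mmul a b) = prodhat (wcat (p, ps) (q, qs)).
    by rewrite prodhat_cat Mmul_val e e'.
  rewrite !Mmul_val (MD_spec E1) (MD_spec e) (chain_hd_tl c).1 hd_cat.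
  by rewrite hat_le_l ?hat_le_r //; exact: hd_le.
split.
  move=> a b; have [p [ps [c e]]] := M_chain a; have [q [qs [c' e']]] := M_chain b.
  apply: Meq.
  have E1 : proj1_sig (Mmul a b) = prodhat (wcat (p, ps) (q, qs)).
    by rewrite prodhat_cat Mmul_val e e'.
  rewrite !Mmul_val (MR_spec E1) (MR_spec e') (chain_hd_tl c').2 tl_cat.
  by rewrite hat_le_l ?hat_le_r //; exact: tl_le.
split.
  move=> a; have [p [ps [c e]]] := M_chain a; apply: Meq.
  have E : proj1_sig (MD a) = prodhat (hd (p, ps), [::]) by rewrite (MD_spec e).
  by rewrite (MR_spec E) (MD_spec e) tl_single.
move=> a; have [p [ps [c e]]] := M_chain a; apply: Meq.
have E : proj1_sig (MR a) = prodhat (tl (p, ps), [::]) by rewrite (MR_spec e).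
by rewrite (MD_spec E) (MR_spec e) hd_single.
Qed.

Lemma MR_left x (a : MT) : proj1_sig (MR (Mmul (fM x) a)) = hat ((proj1_sig a).1 x).
Proof.
have [w e] := inM_word (proj2_sig a).
have E : proj1_sig (Mmul (fM x) a) = prodhat (wcat (x, [::]) w).
  by rewrite prodhat_cat Mmul_val e.
by rewrite (MR_spec E) tl_cat tl_single e.
Qed.

Lemma MD_right x (a : MT) : proj1_sig (MD (Mmul a (fM x))) = hat ((proj1_sig a).2 x).
Proof.
have [w e] := inM_word (proj2_sig a).
have E : proj1_sig (Mmul a (fM x)) = prodhat (wcat w (x, [::])).
  by rewrite prodhat_cat Mmul_val e.
by rewrite (MD_spec E) hd_cat hd_single e.
Qed.

Lemma fM_proj x : MD (fM x) = fM x.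
Proof. apply: Meq; by rewrite (@MD_spec _ (x, [::])) // hd_single. Qed.

Lemma fM_inj x y : fM x = fM y -> x = y.
Proof. move=> e; apply: hat_inj; exact: (f_equal (@proj1_sig _ _) e). Qed.

Lemma M_projE (a : MT) : is_proj MD a -> exists p, a = fM p.
Proof.
case=> b ->; have [p [ps [c e]]] := M_chain b.
exists p; apply: Meq; by rewrite (MD_spec e) (chain_hd_tl c).1.
Qed.

Lemma M_projgen : proj_generated Mmul MD.
Proof.
case=> x h.
suff : forall h' : inM theta delta x, sgen Mmul (is_proj MD) (exist _ x h') by [].
elim: h => [y [p ->] | y z hy IH1 hz IH2] h'.
  apply: sgen_base; exists (fM p); apply: Meq; by rewrite fM_proj.
have -> : exist (inM theta delta) (rmul y z) h' = Mmul (exist _ y hy) (exist _ z hz).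
  exact: Meq.
exact: sgen_mul.
Qed.

Lemma M_projiso : proj_iso theta delta Mmul MD MR fM.
Proof.
split; first by move=> p; exists (fM p); rewrite fM_proj.
split; first by move=> x /M_projE [p ->]; exists p.
split; first exact: fM_inj.
split.
  move=> p q; apply: Meq; by rewrite MR_left.
move=> p q; apply: Meq; by rewrite MD_right.
Qed.

Lemma M_fund : fundamental Mmul MD MR.
Proof.
exists (fun a b => a = b); split; last by [].
split.
  split; last by move=> p q _ _.
  by repeat split; move=> *; subst.
move=> tau [[_ [_ [_ [cl [cr [cD cR]]]]]] sep] a b hab.
apply: Meq; apply: raw_eq => x.
- have h := cR _ _ (cl _ _ (fM x) hab).
  have e1 := MR_left x a; have e2 := MR_left x b.
  have : MR (Mmul (fM x) a) = MR (Mmul (fM x) b).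
    apply: sep h.
    + by exists (fM ((proj1_sig a).1 x)); apply: Meq; rewrite e1 fM_proj.
    + by exists (fM ((proj1_sig b).1 x)); apply: Meq; rewrite e2 fM_proj.
  move/(f_equal (@proj1_sig _ _)); rewrite e1 e2; exact: hat_inj.
- have h := cD _ _ (cr _ _ (fM x) hab).
  have e1 := MD_right x a; have e2 := MD_right x b.
  have : MD (Mmul a (fM x)) = MD (Mmul b (fM x)).
    apply: sep h.
    + by exists (fM ((proj1_sig a).2 x)); apply: Meq; rewrite e1 fM_proj.
    + by exists (fM ((proj1_sig b).2 x)); apply: Meq; rewrite e2 fM_proj.
  move/(f_equal (@proj1_sig _ _)); rewrite e1 e2; exact: hat_inj.
Qed.


Lemma bij_of (A B : Type) (f : A -> B) :
  (forall x y, f x = f y -> x = y) -> (forall y, exists x, f x = y) -> bijective f.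
Proof.
move=> inj surj.
exists (fun y => proj1_sig (constructive_indefinite_description _ (surj y))).
- move=> x; apply: inj; exact: (proj2_sig (constructive_indefinite_description _ (surj (f x)))).
- move=> y; exact: (proj2_sig (constructive_indefinite_description _ (surj y))).
Qed.

Lemma uniq_part (S : Type) (mul : S -> S -> S) (D R : S -> S) :
  is_DRC mul D R -> proj_generated mul D -> fundamental mul D R ->
  (exists f : P -> S, proj_iso theta delta mul D R f) ->
  DRC_iso mul D R Mmul MD MR.
Proof.
move=> [asc [dl [rr [dD [rR [_ [_ [rd dr]]]]]]]] hgen [mu [[_ hmax] hmueq]]
  [g [gp [gs [gi [gth gde]]]]].
pose ginv (x0 : P) (y : S) := epsilon (inhabits x0) (fun p => g p = y).
have ginv_spec x0 y : is_proj D y -> g (ginv x0 y) = y.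
  move=> hy; have [p e] := gs y hy; exact: (epsilon_spec (inhabits x0) (fun p => g p = y) (ex_intro _ p e)).
have ginv_g x0 p : ginv x0 (g p) = p by apply: gi; apply: ginv_spec.
have ginv_indep x0 x1 y : is_proj D y -> ginv x0 y = ginv x1 y.
  by move=> hy; apply: gi; rewrite !ginv_spec.
have projR z : is_proj D (R z) by exists (R z); rewrite dr.
have projD z : is_proj D (D z) by exists z.
pose phi (a : S) : raw P :=
  (fun x => ginv x (R (mul (g x) a)), fun x => ginv x (D (mul a (g x)))).
have phi_g p : phi (g p) = hat p.
  by apply: raw_eq => x /=; [rewrite -gth ginv_g | rewrite -gde ginv_g].
have phi_mul a b : phi (mul a b) = rmul (phi a) (phi b).
  apply: raw_eq => x /=.
  - rewrite ginv_spec // -rR asc; exact: ginv_indep.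
  - rewrite ginv_spec // -dD asc; exact: ginv_indep.
have phi_inM a : inM theta delta (phi a).
  elim: (hgen a) => [y hy | y z _ h1 _ h2].
    have [p <-] := gs y hy; rewrite phi_g; apply: sgen_base; by exists p.
  rewrite phi_mul; exact: sgen_mul.
pose Phi (a : S) : MT := exist _ (phi a) (phi_inM a).
have Phi_g p : Phi (g p) = fM p by apply: Meq; exact: phi_g.
have Phi_mul a b : Phi (mul a b) = Mmul (Phi a) (Phi b) by apply: Meq; exact: phi_mul.
have Phi_D a : Phi (D a) = MD (Phi a).
  have [p0 e0] := gs (R a) (projR a).
  have ha : mul a (g p0) = a by rewrite e0 rr.
  have [q e1] := gs (D a) (projD a).
  rewrite -e1 Phi_g -ha Phi_mul Phi_g; apply: Meq; rewrite MD_right /=.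
  by rewrite ha -e1 ginv_g.
have Phi_R a : Phi (R a) = MR (Phi a).
  have [p0 e0] := gs (D a) (projD a).
  have ha : mul (g p0) a = a by rewrite e0 dl.
  have [q e1] := gs (R a) (projR a).
  rewrite -e1 Phi_g -ha Phi_mul Phi_g; apply: Meq; rewrite MR_left /=.
  by rewrite ha -e1 ginv_g.
have Phi_surj : forall y, exists a, Phi a = y.
  case=> x h.
  suff : forall h' : inM theta delta x, exists a, Phi a = exist _ x h' by [].
  elim: h => [y [p ->] | y z hy IH1 hz IH2] h'.
    by exists (g p); apply: Meq; exact: phi_g.
  have [a1 e1] := IH1 hy; have [a2 e2] := IH2 hz.
  exists (mul a1 a2); apply: Meq; rewrite Phi_mul Mmul_val e1 e2 //.
have Phi_inj : forall a b, Phi a = Phi b -> a = b.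
  move=> a b h; apply/hmueq; apply: (hmax (fun a b => Phi a = Phi b)) h.
  split.
    split; first by [].
    split; first by move=> ? ? ->.
    split; first by move=> ? ? ? -> ->.
    split; first by move=> ? ? c e; rewrite !Phi_mul e.
    split; first by move=> ? ? c e; rewrite !Phi_mul e.
    split; first by move=> ? ? e; rewrite !Phi_D e.
    by move=> ? ? e; rewrite !Phi_R e.
  move=> p q hp hq; have [x <-] := gs p hp; have [y <-] := gs q hq.
  by rewrite !Phi_g => /fM_inj ->.
exists Phi; split; first exact: bij_of.
split; first exact: Phi_mul.
split; [exact: Phi_D | exact: Phi_R].
Qed.


Lemma sig_eq (A : Type) (Pr : A -> Prop) (x y : sig Pr) : proj1_sig x = proj1_sig y -> x = y.
Proof.
case: x => x hx; case: y => y hy /= e; subst y.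
by rewrite (proof_irrelevance _ hx hy).
Qed.

Lemma iso_inv (A : Type) (mulA : A -> A -> A) (DA RA : A -> A)
  (B : Type) (mulB : B -> B -> B) (DB RB : B -> B) (rho : B -> A) :
  bijective rho -> (forall x y, rho (mulB x y) = mulA (rho x) (rho y)) ->
  (forall x, rho (DB x) = DA (rho x)) -> (forall x, rho (RB x) = RA (rho x)) ->
  DRC_iso mulA DA RA mulB DB RB.
Proof.
case=> sig c1 c2 hm hd hr; have inj := can_inj c1.
exists sig; split; first by exists rho.
split; first by move=> a b; apply: inj; rewrite hm !c2.
split; first by move=> a; apply: inj; rewrite hd !c2.
by move=> a; apply: inj; rewrite hr !c2.
Qed.

Section Quot.
Variables (T : Type) (r : T -> T -> Prop).
Hypotheses (rrefl : forall x, r x x) (rsym : forall x y, r x y -> r y x)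
  (rtrans : forall x y z, r x y -> r y z -> r x z).

Lemma cls_eq t t' : r t t' -> cls r t = cls r t'.
Proof.
move=> h; apply: sig_eq => /=; apply: functional_extensionality => z.
apply: propositional_extensionality; split => h'.
- apply: rtrans h'; exact: rsym.
- exact: rtrans h'.
Qed.

Lemma cls_inj t t' : cls r t = cls r t' -> r t t'.
Proof. move/(f_equal (@proj1_sig _ _)) => /= ->; exact: rrefl. Qed.

Lemma rep_cls (X : quot r) : X = cls r (rep X).
Proof.
apply: sig_eq => /=; rewrite /rep.
exact: (proj2_sig (constructive_indefinite_description _ (proj2_sig X))).
Qed.

Lemma rep_r t : r (rep (cls r t)) t.
Proof. apply: cls_inj; by rewrite -rep_cls. Qed.
End Quot.


Notation FT := (Ftype theta delta).
Notation Fmul := (@Fmul P theta delta).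
Notation FD := (@FD P theta delta).
Notation FR := (@FR P theta delta).

Definition Frefl := (@Fc_refl P theta delta).
Definition Ftrans := (@Fc_trans P theta delta).

Definition psi0 (X : FT) := prodhat (rep X).

Lemma rep_F w : Fcong (rep (cls Fcong w)) w.
Proof. apply: rep_r; exact: Frefl. Qed.

Lemma clsF_eq u v : Fcong u v -> cls Fcong u = cls Fcong v.
Proof. apply: cls_eq; [exact: Fsym | exact: Ftrans]. Qed.

Lemma clsF_inj u v : cls Fcong u = cls Fcong v -> Fcong u v.
Proof. apply: cls_inj; exact: Frefl. Qed.

Lemma psi0_cls w : psi0 (cls Fcong w) = prodhat w.
Proof. exact: prodhat_resp (rep_F w). Qed.

Lemma psi0_mul X Y : psi0 (Fmul X Y) = rmul (psi0 X) (psi0 Y).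
Proof. by rewrite /Defs.Fmul /qmul psi0_cls prodhat_cat. Qed.

Lemma FD_spec X : FD X = cls Fcong (hd (rep X), [::]).
Proof.
set pr := (fun Y : FT => exists p ps, Fchain (p :: ps) /\ X = cls Fcong (p, ps) /\
    Y = cls Fcong (p, [::])).
have ex : exists Y, pr Y.
  have [p [ps [c f _ _]]] := reduce (rep X).
  exists (cls Fcong (p, [::])), p, ps; split => //; split => //.
  rewrite {1}(rep_cls X); exact: clsF_eq.
have := epsilon_spec (inhabits X) pr ex.
rewrite /Defs.FD; move=> [p' [ps' [c' [e' ->]]]].
congr (cls _ (_, _)).
have h : prodhat (rep X) = prodhat (p', ps') by rewrite e'; exact: prodhat_resp (rep_F _).
by rewrite (hd_resp h).1 (chain_hd_tl c').1.
Qed.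

Lemma FR_spec X : FR X = cls Fcong (tl (rep X), [::]).
Proof.
set pr := (fun Y : FT => exists p ps, Fchain (p :: ps) /\ X = cls Fcong (p, ps) /\
    Y = cls Fcong (last p ps, [::])).
have ex : exists Y, pr Y.
  have [p [ps [c f _ _]]] := reduce (rep X).
  exists (cls Fcong (last p ps, [::])), p, ps; split => //; split => //.
  rewrite {1}(rep_cls X); exact: clsF_eq.
have := epsilon_spec (inhabits X) pr ex.
rewrite /Defs.FR; move=> [p' [ps' [c' [e' ->]]]].
congr (cls _ (_, _)).
have h : prodhat (rep X) = prodhat (p', ps') by rewrite e'; exact: prodhat_resp (rep_F _).
by rewrite (hd_resp h).2 (chain_hd_tl c').2.
Qed.

Lemma single_proj h : is_proj FD (cls Fcong (h, [::])).
Proof.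
exists (cls Fcong (h, [::])); rewrite FD_spec.
by rewrite (hd_resp (prodhat_resp (rep_F (h, [::])))).1 hd_single.
Qed.

Lemma single_inj h h' : cls Fcong (h, [::]) = cls Fcong (h', [::]) -> h = h'.
Proof. by move/clsF_inj/prodhat_resp/hat_inj. Qed.

Definition muF (X Y : FT) := psi0 X = psi0 Y.

Lemma tl_left x X : tl (rep (Fmul (cls Fcong (x, [::])) X)) = (psi0 X).1 x.
Proof.
have h : prodhat (rep (Fmul (cls Fcong (x, [::])) X)) = prodhat (wcat (x, [::]) (rep X)).
  by rewrite -/(psi0 _) psi0_mul psi0_cls prodhat_cat.
by rewrite (hd_resp h).2 tl_cat tl_single.
Qed.

Lemma hd_right x X : hd (rep (Fmul X (cls Fcong (x, [::])))) = (psi0 X).2 x.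
Proof.
have h : prodhat (rep (Fmul X (cls Fcong (x, [::])))) = prodhat (wcat (rep X) (x, [::])).
  by rewrite -/(psi0 _) psi0_mul psi0_cls prodhat_cat.
by rewrite (hd_resp h).1 hd_cat hd_single.
Qed.

Lemma F_mu : is_mu Fmul FD FR muF.
Proof.
rewrite /muF; split.
  split.
    split; first by [].
    split; first by move=> ? ? ->.
    split; first by move=> ? ? ? -> ->.
    split; first by move=> ? ? c e; rewrite !psi0_mul e.
    split; first by move=> ? ? c e; rewrite !psi0_mul e.
    split; first by move=> a b e; rewrite !FD_spec !psi0_cls /= (hd_resp e).1.
    by move=> a b e; rewrite !FR_spec !psi0_cls /= (hd_resp e).2.
  move=> p q [a ->] [b ->]; rewrite !FD_spec !psi0_cls /= => /hat_inj /= e; by rewrite e.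
move=> tau [[_ [_ [_ [cl [cr [cD cR]]]]]] sep] a b hab.
apply: raw_eq => x.
- have h := cR _ _ (cl _ _ (cls Fcong (x, [::])) hab).
  have : FR (Fmul (cls Fcong (x, [::])) a) = FR (Fmul (cls Fcong (x, [::])) b).
    by apply: sep h; rewrite FR_spec; exact: single_proj.
  by rewrite !FR_spec => /single_inj; rewrite !tl_left.
- have h := cD _ _ (cr _ _ (cls Fcong (x, [::])) hab).
  have : FD (Fmul a (cls Fcong (x, [::]))) = FD (Fmul b (cls Fcong (x, [::]))).
    by apply: sep h; rewrite FD_spec; exact: single_proj.
  by rewrite !FD_spec => /single_inj; rewrite !hd_right.
Qed.


Lemma F_iso : DRC_iso Mmul MD MR (@qmul _ muF Fmul) (@qun _ muF FD) (@qun _ muF FR).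
Proof.
have mrefl : forall X, muF X X by [].
have msym : forall X Y, muF X Y -> muF Y X by move=> X Y; rewrite /muF => ->.
have mtrans : forall X Y Z, muF X Y -> muF Y Z -> muF X Z
  by move=> X Y Z; rewrite /muF => -> ->.
pose rho (Z : quot muF) : MT := exist (inM theta delta) (psi0 (rep Z)) (inM_prodhat _).
have rho_cls X : proj1_sig (rho (cls muF X)) = psi0 X by exact: (rep_r mrefl).
apply: (@iso_inv _ _ _ _ _ _ _ _ rho).
- apply: bij_of.
  + move=> Z W e; rewrite (rep_cls Z) (rep_cls W); apply: (cls_eq msym mtrans).
    exact: (f_equal (@proj1_sig _ _) e).
  + move=> y; have [w e] := inM_word (proj2_sig y).
    exists (cls muF (cls Fcong w)); apply: Meq; by rewrite rho_cls psi0_cls e.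
- move=> Z W; apply: Meq; by rewrite /qmul rho_cls psi0_mul.
- move=> Z; apply: Meq; rewrite /qun rho_cls FD_spec psi0_cls.
  by rewrite (@MD_spec _ (rep (rep Z))).
- move=> Z; apply: Meq; rewrite /qun rho_cls FR_spec psi0_cls.
  by rewrite (@MR_spec _ (rep (rep Z))).
Qed.

End PA.

Theorem theorem8p19 (P : Type) (theta delta : P -> P -> P)
  (HP : is_projalg theta delta) :
  (is_DRC (@Mmul P theta delta) (@MD P theta delta) (@MR P theta delta) /\
   proj_generated (@Mmul P theta delta) (@MD P theta delta) /\
   fundamental (@Mmul P theta delta) (@MD P theta delta) (@MR P theta delta) /\
   (exists f : P -> Mtype theta delta,
      proj_iso theta delta (@Mmul P theta delta) (@MD P theta delta) (@MR P theta delta) f)) /\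
  (forall (S : Type) (mul : S -> S -> S) (D R : S -> S),
     is_DRC mul D R -> proj_generated mul D -> fundamental mul D R ->
     (exists f : P -> S, proj_iso theta delta mul D R f) ->
     DRC_iso mul D R (@Mmul P theta delta) (@MD P theta delta) (@MR P theta delta)) /\
  (exists mu : Ftype theta delta -> Ftype theta delta -> Prop,
     is_mu (@Fmul P theta delta) (@FD P theta delta) (@FR P theta delta) mu /\
     DRC_iso (@Mmul P theta delta) (@MD P theta delta) (@MR P theta delta)
       (@qmul _ mu (@Fmul P theta delta)) (@qun _ mu (@FD P theta delta))
       (@qun _ mu (@FR P theta delta))).
Proof.
split.
  split; first exact: M_DRC.
  split; first exact: M_projgen.
  split; first exact: M_fund.
  exists (@fM _ theta delta); exact: M_projiso.
split; first by move=> S mul D R; exact: uniq_part.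
exists (@muF _ theta delta); split; [exact: F_mu | exact: F_iso].
Qed.
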